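(* Let $(R,\mathfrak m,k)$ be a one-dimensional analytically irreducible local domain with canonical map $k\to\overline R/\mathfrak n$ an isomorphism, with $n,\mathcal T(R),\mathcal I(R)$ as in the context. If $n\le 3$, then $\mathcal T(R)=\mathcal I(R)$; in particular $\mathcal T(R)$ is a finite set.
   Context: $\overline R$ is the integral closure of $R$ in $Q(R)$, assumed finitely generated over $R$ and local with maximal ideal $\mathfrak n$; $v$ is the normalized valuation of $\overline R$; $v(R)=\{a_0=0<a_1<\cdots\}$; $n$ is the smallest integer with $a_{n+j}=a_n+j$ for all $j\ge 0$ (equivalently $n=\ell_R(R/(R:\overline R))$); $I_j=\{r\in R\mid v(r)\ge a_j\}$ for $0\le j\le n$ and $\mathcal I(R)=\{I_0,\dots,I_n\}$. $\mathcal T(R)$ is the set of nonzero trace ideals of $R$ (ideals of the form $\sum_{f\in\mathrm{Hom}_R(M,R)}\mathrm{Im}f$). *)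

(* Defs.v *)
From Stdlib Require List.
From HB Require Import structures.
From mathcomp Require Import all_boot all_order all_algebra fraction.
Set Implicit Arguments. Unset Strict Implicit. Unset Printing Implicit Defensive.
Import Order.TTheory GRing.Theory Num.Theory.
Local Open Scope ring_scope.

Section Defs.
Variable R : idomainType.

Definition K := {fraction R}.
Definition toK (r : R) : K := FracField.tofrac r.

Definition is_ideal (I : R -> Prop) : Prop :=
  I 0 /\ (forall x y, I x -> I y -> I (x + y)) /\ (forall a x, I x -> I (a * x)).

Definition in_span (s : seq R) (x : R) : Prop :=
  exists c : seq R, x = \sum_(i < size s) c`_i * s`_i.

Definition noetherian : Prop :=
  forall I, is_ideal I -> exists s : seq R, forall x, I x <-> in_span s x.

(* maximal ideal = non-units; R local iff the non-units are closed under + *)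
Definition mm (x : R) : Prop := x \isn't a GRing.unit.
Definition local_ring : Prop := forall x y, mm x -> mm y -> mm (x + y).

Definition is_prime (P : R -> Prop) : Prop :=
  is_ideal P /\ ~ P 1 /\ (forall a b, P (a * b) -> P a \/ P b).

(* Krull dimension one, for a local domain: m <> 0 and every nonzero prime is m *)
Definition dim_one : Prop :=
  (exists x, x != 0 /\ mm x) /\
  (forall P, is_prime P -> (exists x, x != 0 /\ P x) -> forall x, mm x -> P x).

Fixpoint mpow (k : nat) (x : R) : Prop :=
  match k with
  | 0 => True
  | k'.+1 => exists s : seq (R * R),
      (forall p, List.In p s -> mm p.1 /\ mpow k' p.2) /\
      x = \sum_(p <- s) p.1 * p.2
  end.

(* m-adic Cauchy and null sequences; the completion R^ is Cauchy / null. *)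
Definition madic_cauchy (u : nat -> R) : Prop :=
  forall k, exists N, forall p q, (N <= p)%N -> (N <= q)%N -> mpow k (u p - u q).
Definition madic_null (u : nat -> R) : Prop :=
  forall k, exists N, forall p, (N <= p)%N -> mpow k (u p).

(* analytically irreducible: the m-adic completion is a domain *)
Definition analytically_irreducible : Prop :=
  forall u w, madic_cauchy u -> madic_cauchy w ->
    madic_null (fun p => u p * w p) -> madic_null u \/ madic_null w.

(* integral closure Rbar of R in K = Q(R) *)
Definition integral (x : K) : Prop :=
  exists p : {poly R}, p \is monic /\ root (map_poly toK p) x.

Definition Rbar_unit (x : K) : Prop := integral x /\ x != 0 /\ integral x^-1.
Definition nn (x : K) : Prop := integral x /\ ~ Rbar_unit x.

Definition Rbar_finite : Prop :=
  exists s : seq K, forall x, integral x <->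
    exists c : seq R, x = \sum_(i < size s) toK c`_i * s`_i.
Definition Rbar_local : Prop := forall x y, nn x -> nn y -> nn (x + y).

(* canonical map k = R/m -> Rbar/n is an isomorphism (it is always injective) *)
Definition residue_iso : Prop :=
  forall x, integral x -> exists r : R, nn (x - toK r).

(* v is the normalized (surjective onto Z) valuation of K whose
   valuation ring is Rbar; v is only meaningful on nonzero elements *)
Definition normalized_valuation_of_Rbar (v : K -> int) : Prop :=
  (forall x y, x != 0 -> y != 0 -> v (x * y) = v x + v y) /\
  (forall x y, x != 0 -> y != 0 -> x + y != 0 -> Num.min (v x) (v y) <= v (x + y)) /\
  (forall z : int, exists x, x != 0 /\ v x = z) /\
  (forall x, x != 0 -> (integral x <-> 0 <= v x)).

Definition valR (v : K -> int) (s : nat) : Prop :=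
  exists r : R, r != 0 /\ v (toK r) = s%:Z.

Definition enumerates (S : nat -> Prop) (a : nat -> nat) : Prop :=
  (forall j, (a j < a j.+1)%N) /\ (forall s, S s <-> exists j, a j = s).

Definition conductor_index (a : nat -> nat) (n : nat) : Prop :=
  (forall j, a (n + j)%N = (a n + j)%N) /\
  (forall m, (forall j, a (m + j)%N = (a m + j)%N) -> (n <= m)%N).

Definition Ij (v : K -> int) (a : nat -> nat) (j : nat) (x : R) : Prop :=
  x = 0 \/ (x != 0 /\ (a j)%:Z <= v (toK x)).

Definition Rlinear (M : lmodType R) (f : M -> R) : Prop :=
  forall (c : R) (m m' : M), f (c *: m + m') = c * f m + f m'.

Definition trace_ideal (M : lmodType R) (x : R) : Prop :=
  exists s : seq ((M -> R) * M),
    (forall p, List.In p s -> Rlinear p.1) /\ x = \sum_(p <- s) p.1 p.2.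

Definition in_T (J : R -> Prop) : Prop :=
  (exists M : lmodType R, forall x, J x <-> trace_ideal M x) /\
  (exists x, x != 0 /\ J x).

Definition in_I (v : K -> int) (a : nat -> nat) (n : nat) (J : R -> Prop) : Prop :=
  exists j, (j <= n)%N /\ forall x, J x <-> Ij v a j x.

End Defs.

(* Main.v *)
Require Import Defs.
From HB Require Import structures.
From mathcomp Require Import all_boot all_order all_algebra fraction.
From mathcomp Require Import boolp.
From mathcomp Require Import zify ring.
Set Implicit Arguments. Unset Strict Implicit. Unset Printing Implicit Defensive.
Import Order.TTheory GRing.Theory Num.Theory.
Local Open Scope ring_scope.

Lemma frac_repr (R : idomainType) (x : K R) :
  exists a b : R, b != 0 /\ x * toK b = toK a.
Proof.
rewrite /toK /K in x *.
elim/quotW: x => r.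
exists (\n_r), (\d_r); split; first exact: denom_ratioP.
unlock FracField.tofrac.
rewrite -[LHS]FracField.pi_mul; apply/eqmodP; rewrite /= FracField.equivfE.
rewrite /FracField.mulf !numden_Ratio ?oner_eq0 ?mulf_neq0 ?denom_ratioP //.
- by rewrite !mulr1 mulrC.
all: exact: oner_neq0.
Qed.

Section Val.
Variable R : idomainType.
Local Notation KK := (K R).
Local Notation t := (@toK R).
Variable v : KK -> int.
Hypothesis Hv : normalized_valuation_of_Rbar v.

Lemma vM x y : x != 0 -> y != 0 -> v (x*y) = v x + v y.
Proof. by case: Hv => h _; apply: h. Qed.
Lemma vDmin x y : x != 0 -> y != 0 -> x + y != 0 -> Num.min (v x) (v y) <= v (x+y).
Proof. by case: Hv => _ [h _]; apply: h. Qed.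
Lemma vI x : x != 0 -> integral x <-> 0 <= v x.
Proof. by case: Hv => _ [_ [_ h]]; apply: h. Qed.
Lemma v1 : v 1 = 0.
Proof.
have : v (1:KK) = v (1:KK) + v (1:KK) by rewrite -{1}(mulr1 (1 : KK)) vM // oner_neq0.
lia.
Qed.
Lemma vV x : x != 0 -> v x^-1 = - v x.
Proof.
move=> x0; have := vM x0 (invr_neq0 x0); rewrite divff // v1; lia.
Qed.
Lemma vdiv x y : x != 0 -> y != 0 -> v (x / y) = v x - v y.
Proof. by move=> x0 y0; rewrite vM ?invr_neq0 // vV. Qed.
Lemma t_neq0 r : r != 0 -> t r != 0.
Proof. by rewrite /toK tofrac_eq0. Qed.
Lemma t_inj : injective t.
Proof. by move=> x y /eqP; rewrite /toK tofrac_eq => /eqP. Qed.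
Lemma integral_t r : integral (t r).
Proof.
exists ('X - r%:P); split; first exact: monicXsubC.
by rewrite rmorphB /= map_polyX map_polyC /= rootE !hornerE subrr.
Qed.
Lemma integral0 : integral (0 : KK).
Proof. have := integral_t 0; by rewrite /toK rmorph0. Qed.
Lemma vt r : r != 0 -> 0 <= v (t r).
Proof. by move=> r0; apply/(vI (t_neq0 r0)); apply: integral_t. Qed.

Lemma nnE x : nn x <-> x = 0 \/ (x != 0 /\ 0 < v x).
Proof.
split.
- case=> ix nu; have [->|x0] := eqVneq x 0; first by left.
  right; split => //; have := (vI x0).1 ix; rewrite le_eqVlt => /orP[/eqP h|//].
  exfalso; apply: nu; split => //; split => //.
  by apply/(vI (invr_neq0 x0)); rewrite vV // -h.
- case=> [->|[x0 vx]].
  + by split; [exact: integral0 | case=> _ []; rewrite eqxx].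
  + split; first by apply/(vI x0); rewrite ltW.
    case=> _ [_ /(vI (invr_neq0 x0))]; rewrite vV //; lia.
Qed.

Hypothesis Hres : residue_iso R.

Lemma approx x y : x != 0 -> y != 0 -> v x = v y ->
  exists u : R, x - t u * y = 0 \/ (x - t u * y != 0 /\ v y < v (x - t u * y)).
Proof.
move=> x0 y0 exy.
have z0 : x / y != 0 by rewrite mulf_neq0 ?invr_neq0.
have vz : v (x / y) = 0 by rewrite vdiv // exy subrr.
have iz : integral (x / y) by apply/(vI z0); rewrite vz.
have [r /nnE hr] := Hres iz.
exists r; have E : x - t r * y = (x / y - t r) * y by rewrite mulrBl divfK.
case: hr => [h|[h1 h2]]; [left|right]; rewrite E ?h ?mul0r //.
split; first by rewrite mulf_neq0.
rewrite vM // -subr_gt0 addrK; exact: h2.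
Qed.

Hypothesis Hloc : local_ring R.

Lemma v_unit r : r \is a GRing.unit -> v (t r) = 0.
Proof.
move=> ur; have r0 : r != 0 by apply: contraTneq ur => ->; rewrite unitr0.
have ri0 : r^-1 != 0 by rewrite invr_eq0.
have := vM (t_neq0 r0) (t_neq0 ri0).
rewrite /toK -rmorphM /= divrr // rmorph1 v1.
have := vt r0; have := vt ri0; rewrite /toK; lia.
Qed.

Lemma v0_unit r : r != 0 -> v (t r) = 0 -> r \is a GRing.unit.
Proof.
move=> r0 vr; apply/negPn/negP => nu.
have x0 := t_neq0 r0.
have ix : integral (t r)^-1 by apply/(vI (invr_neq0 x0)); rewrite vV // vr.
have [u /nnE hu] := Hres ix.
have E : ((t r)^-1 - t u) * t r = t (1 - u * r).
  by rewrite mulrBl mulVf // /toK rmorphB rmorph1 rmorphM.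
have mur : mm (u * r) by rewrite /mm unitrM negb_and nu orbT.
case: hu => [h|[h1 h2]].
- have h0 : 1 - u * r = 0.
    by apply/eqP; rewrite -tofrac_eq0; move: E; rewrite /toK => <-; rewrite h mul0r.
  move/eqP: h0; rewrite subr_eq0 => /eqP h1.
  by move/negP: nu; apply; apply/unitrP; exists u; rewrite -h1 mulrC.
- have m1 : mm (1 - u * r).
    apply/negP => /v_unit; rewrite -E vM ?invr_neq0 // vr addr0 => h3; by move: h2; rewrite h3 ltxx.
  by have := Hloc m1 mur; rewrite /mm subrK unitr1.
Qed.


Lemma tM x y : t (x * y) = t x * t y. Proof. by rewrite /toK rmorphM. Qed.
Lemma tD x y : t (x + y) = t x + t y. Proof. by rewrite /toK rmorphD. Qed.
Lemma tB x y : t (x - y) = t x - t y. Proof. by rewrite /toK rmorphB. Qed.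
Lemma t0 : t 0 = 0. Proof. by rewrite /toK rmorph0. Qed.
Lemma t1 : t 1 = 1. Proof. by rewrite /toK rmorph1. Qed.

Lemma common_den (s : seq KK) : exists D : R, exists rs : seq R, D != 0 /\
  size rs = size s /\ forall i, (i < size s)%N -> t D * s`_i = t rs`_i.
Proof.
elim: s => [|x s [D [rs [D0 [Hs Hi]]]]].
- by exists 1, [::]; split; [exact: oner_neq0 | split].
- have [a' [b [b0 hb]]] := frac_repr x.
  exists (b * D), (D * a' :: map ( *%R b) rs); split; first by rewrite mulf_neq0.
  split; first by rewrite /= size_map Hs.
  case=> [_|i] /=.
  + have -> : t (b * D) * x = t D * (x * t b) by rewrite tM; ring.
    by rewrite hb tM.
  + move=> hi; rewrite (nth_map 0) ?Hs // !tM -mulrA Hi //.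
Qed.

Hypothesis Hfin : Rbar_finite R.

Lemma big_in_R : exists N : int, forall y, y != 0 -> N <= v y -> exists r, y = t r.
Proof.
have [s Hs] := Hfin.
have [D [rs [D0 [Hsz Hi]]]] := common_den s.
exists (v (t D)) => y y0 hy.
have tD0 := t_neq0 D0.
have yD0 : y / t D != 0 by rewrite mulf_neq0 ?invr_neq0.
have iy : integral (y / t D) by apply/(vI yD0); rewrite vdiv // subr_ge0.
have [c hc] := (Hs _).1 iy.
exists (\sum_(i < size s) c`_i * rs`_i).
rewrite /toK rmorph_sum /= -/(toK _).
have -> : y = t D * (y / t D) by rewrite mulrC divfK.
rewrite hc mulr_sumr; apply: eq_bigr => i _.
by rewrite -/(toK _) tM -Hi // mulrCA.
Qed.

Variable a : nat -> nat.
Hypothesis Ha : enumerates (valR v) a.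
Variable n : nat.
Hypothesis Hn : conductor_index a n.

Lemma a_lt i j : (i < j)%N -> (a i < a j)%N.
Proof.
case: Ha => inc _; elim: j i => [//|j IH] i.
rewrite ltnS leq_eqVlt => /orP[/eqP->|/IH h]; first exact: inc.
exact: ltn_trans h (inc j).
Qed.
Lemma a_le i j : (i <= j)%N -> (a i <= a j)%N.
Proof. by rewrite leq_eqVlt => /orP[/eqP->//|/a_lt/ltnW]. Qed.
Lemma a_lt_inv i j : (a i < a j)%N -> (i < j)%N.
Proof. by move=> h; rewrite ltnNge; apply/negP => /a_le; rewrite leqNgt h. Qed.
Lemma a_le_inv i j : (a i <= a j)%N -> (i <= j)%N.
Proof. by move=> h; rewrite leqNgt; apply/negP => /a_lt; rewrite ltnNge h. Qed.

Lemma a0 : a 0 = 0%N.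
Proof.
case: Ha => _ h.
have : valR v 0 by exists 1; split; [exact: oner_neq0 | by rewrite t1 v1].
move/h => [j hj]; have := a_le (leq0n j); rewrite hj leqn0 => /eqP //.
Qed.

Lemma val_in r : r != 0 -> exists j, v (t r) = (a j)%:Z.
Proof.
move=> r0; have hr := vt r0.
have : valR v `|v (t r)|%N by exists r; split => //; exact/esym/ssrint.gez0_abs.
case/(Ha.2) => j hj; exists j; rewrite hj; exact/esym/ssrint.gez0_abs.
Qed.

Lemma valR_of (z : int) : (a n)%:Z <= z -> exists r, r != 0 /\ v (t r) = z.
Proof.
move=> hz.
have z0 : 0 <= z by apply: le_trans hz.
have [j hj] : exists j, a j = `|z|%N.
  case: Hn => hs _; exists (n + (`|z|%N - a n))%N; rewrite hs subnKC //.
  by rewrite -lez_nat ssrint.gez0_abs.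
have : valR v (a j) by apply/(Ha.2); exists j.
by case=> r [r0 hr]; exists r; split => //; rewrite hr hj ssrint.gez0_abs.
Qed.

Lemma cond : forall y, y != 0 -> (a n)%:Z <= v y -> exists r, y = t r.
Proof.
have [N HN] := big_in_R.
suff H : forall k : nat, forall y, y != 0 -> (a n)%:Z <= v y -> N - v y <= k%:Z ->
  exists r, y = t r.
  move=> y y0 hy; apply: (H `|N - v y|%N) => //.
  by rewrite abszE ler_norm.
elim=> [|k IH] y y0 hy hk.
- by apply: HN y0 _; rewrite -subr_le0.
- case: (lerP N (v y)) => [hN|hN]; first exact: HN.
  have [r [r0 vr]] := valR_of hy.
  have [u hu] := approx y0 (t_neq0 r0) (esym vr).
  case: hu => [h|[h1 h2]].
  + by exists (u * r); apply/eqP; rewrite tM -subr_eq0 h.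
  + have h3 : (a n)%:Z <= v (y - t u * t r).
      by apply: le_trans hy _; rewrite -vr; exact: ltW h2.
    have h4 : N - v (y - t u * t r) <= k%:Z by move: hk h2; rewrite -vr; lia.
    have [r' hr'] := IH _ h1 h3 h4.
    by exists (r' + u * r); rewrite tD tM -hr' subrK.
Qed.

Lemma gap : (0 < n)%N -> forall j, a j <> (a n).-1.
Proof.
move=> n0 j hj; case: Hn => hs hmin.
have an0 : (0 < a n)%N by rewrite -a0; apply: a_lt.
have h1 : (j < n)%N by apply: a_lt_inv; rewrite hj; lia.
have h2 : (n.-1 <= j)%N.
  apply: a_le_inv; rewrite hj; have : (n.-1 < n)%N by lia.
  move/a_lt; lia.
have ej : j = n.-1 by lia.
have : (n <= j)%N.
  apply: hmin => -[|i]; first by rewrite !addn0.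
  have -> : (j + i.+1 = n + i)%N by lia.
  rewrite hs hj; lia.
lia.
Qed.

End Val.

Lemma In_cat (T : Type) (x : T) (s1 s2 : seq T) :
  List.In x (s1 ++ s2) -> List.In x s1 \/ List.In x s2.
Proof.
elim: s1 => [|y s1 IH] /=; first by right.
case=> [->|/IH [h|h]]; [left; left | left; right | right] => //.
Qed.

Lemma In_map (T U : Type) (f : T -> U) (x : U) (s : seq T) :
  List.In x (map f s) -> exists y, List.In y s /\ x = f y.
Proof.
elim: s => [|y s IH] //= [<-|/IH [z [h1 h2]]]; first by exists y; split; [left|].
by exists z; split; [right|].
Qed.

Section Trace.
Variable R : idomainType.
Variable M : lmodType R.

Lemma Rlin0 (f : M -> R) : Rlinear f -> f 0 = 0.
Proof.
move=> lf; have := lf 1 0 0; rewrite scaler0 addr0 mul1r.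
by rewrite -{1}[f 0]addr0 => /addrI <-.
Qed.

Lemma RlinZ (f : M -> R) c m : Rlinear f -> f (c *: m) = c * f m.
Proof. by move=> lf; have := lf c m 0; rewrite addr0 Rlin0 // addr0. Qed.

Lemma trace_is_ideal : is_ideal (trace_ideal M).
Proof.
split; first by exists [::]; split => //; rewrite big_nil.
split.
- move=> x y [s1 [h1 e1]] [s2 [h2 e2]]; exists (s1 ++ s2); split.
    by move=> p hp; case: (In_cat hp) => [/h1|/h2].
  by rewrite big_cat e1 e2.
- move=> c x [s [h e]]; exists (map (fun p => (p.1, c *: p.2)) s); split.
    by move=> p hp; case: (In_map hp) => q [hq ->] /=; apply: h.
  rewrite big_map e mulr_sumr.
  elim: s h {e} => [|p s IH] h; first by rewrite !big_nil.
  rewrite !big_cons IH; last by move=> q hq; apply: h; right.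
  by rewrite /= RlinZ //; apply: h; left.
Qed.

Local Notation t := (@toK R).

Lemma trace_mult (J : R -> Prop) (HJ : forall x, J x <-> trace_ideal M x) (q : K R) :
  (forall z, J z -> exists r, q * t z = t r) ->
  forall z, J z -> exists r, q * t z = t r /\ J r.
Proof.
move=> hq z /HJ [s [hs ez]].
pose g (f : M -> R) (m : M) : R :=
  match pselect (exists r, q * t (f m) = t r) with
  | left h => proj1_sig (cid h) | right _ => 0 end.
have gP : forall f m, (exists r, q * t (f m) = t r) -> q * t (f m) = t (g f m).
  move=> f m h; rewrite /g; case: pselect => // h'.
  by case: (cid h') => r /=.
have H1 : forall f m, Rlinear f -> q * t (f m) = t (g f m).
  move=> f m lf; apply: gP; apply: hq; apply/HJ; exists [:: (f, m)]; split.
    by move=> p [<-|[]].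
  by rewrite big_seq1.
have glin : forall f, Rlinear f -> Rlinear (g f).
  move=> f lf c m m'; apply: (t_inj (R:=R)).
  by rewrite tD tM -!H1 // lf tD tM; ring.
exists (\sum_(p <- s) g p.1 p.2); split.
- rewrite ez; elim: s hs {ez} => [|p s IH] hs; first by rewrite !big_nil t0 mulr0.
  rewrite !big_cons !tD mulrDr IH; last by move=> p' hp'; apply: hs; right.
  by rewrite H1 //; apply: hs; left.
- apply/HJ; exists (map (fun p => (g p.1, p.2)) s); split.
    by move=> p hp; case: (In_map hp) => p0 [hp0 ->] /=; apply: glin; apply: hs.
  by rewrite big_map.
Qed.

End Trace.

Section Main.
Variable R : idomainType.
Local Notation KK := (K R).
Local Notation t := (@toK R).
Variable v : KK -> int.
Hypothesis Hv : normalized_valuation_of_Rbar v.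
Hypothesis Hres : residue_iso R.
Hypothesis Hloc : local_ring R.
Hypothesis Hfin : Rbar_finite R.
Variable a : nat -> nat.
Hypothesis Ha : enumerates (valR v) a.
Variable n : nat.
Hypothesis Hn : conductor_index a n.
Hypothesis Hn3 : (n <= 3)%N.

Lemma T_to_I (J : R -> Prop) (Jid : is_ideal J)
  (JP : forall q : KK, (forall z, J z -> exists r, q * t z = t r) ->
        forall z, J z -> exists r, q * t z = t r /\ J r)
  (x0 : R) (x00 : x0 != 0) (Jx0 : J x0) :
  exists j, (j <= n)%N /\ forall x, J x <-> Ij v a j x.
Proof.
case: Jid => J0 [JD JM].
have JB : forall x y, J x -> J y -> J (x - y).
  move=> x y hx hy; apply: JD => //; rewrite -mulN1r; exact: JM.
pose P j := exists x, J x /\ x != 0 /\ v (t x) = (a j)%:Z.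
have exP : exists j, `[< P j >].
  have [j hj] := val_in Hv Ha x00; exists j; apply/asboolP; exists x0.
  by split.
case: (ex_minnP exP) => jm /asboolP [x1 [Jx1 [x10 vx1]]] jmin.
have jmin' : forall j, P j -> (jm <= j)%N by move=> j hj; apply: jmin; apply/asboolP.
have Jmin : forall x, J x -> x != 0 -> (a jm)%:Z <= v (t x).
  move=> x Jx x0'; have [j hj] := val_in Hv Ha x0'.
  rewrite hj lez_nat; apply: (a_le Ha); apply: jmin'; exists x.
  by split.
have tx10 := t_neq0 x10.
have pull : forall y, y != 0 -> (forall z, J z -> exists r, (t y / t x1) * t z = t r) -> J y.
  move=> y y0 hq; have [r [hr Jr]] := JP _ hq _ Jx1.
  by move: hr; rewrite divfK // => /t_inj ->.
have Jcond : forall y, y != 0 -> (a n)%:Z <= v (t y) -> J y.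
  move=> y y0 hy; apply: pull => // z Jz.
  have [->|z0] := eqVneq z 0; first by exists 0; rewrite t0 mulr0.
  apply: (cond Hv Hres Hfin Ha Hn).
  - by rewrite !mulf_neq0 ?invr_neq0 ?t_neq0.
  - rewrite vM ?mulf_neq0 ?invr_neq0 ?t_neq0 // vdiv ?t_neq0 //.
    have := Jmin _ Jz z0; rewrite vx1; move: hy; lia.
have jmn : (jm <= n)%N.
  have [y [y0 vy]] := valR_of Ha Hn (lexx (a n)%:Z).
  apply: jmin'; exists y; split; last by split.
  by apply: Jcond => //; rewrite vy.
have fill : (forall k, (jm <= k < n)%N -> P k) -> forall y, Ij v a jm y -> J y.
  move=> hP.
  suff H : forall k : nat, forall y, y != 0 -> (a jm)%:Z <= v (t y) ->
      (a n)%:Z - v (t y) <= k%:Z -> J y.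
    move=> y [->|[y0 hy]] //; apply: (H `|(a n)%:Z - v (t y)|%N) => //.
    by rewrite abszE ler_norm.
  elim=> [|k IH] y y0 hy hk.
  - by apply: Jcond => //; rewrite -subr_le0.
  - case: (lerP (a n)%:Z (v (t y))) => [hc|hc]; first exact: Jcond.
    have [j hj] := val_in Hv Ha y0.
    have jn : (j < n)%N by apply: (a_lt_inv Ha); rewrite -ltz_nat -hj.
    have jj : (jm <= j)%N by apply: (a_le_inv Ha); rewrite -lez_nat -hj.
    have [x [Jx [x0' vx]]] : P j by apply: hP; rewrite jj jn.
    have [u hu] := approx Hv Hres (t_neq0 y0) (t_neq0 x0') (etrans hj (esym vx)).
    rewrite -tM -tB in hu.
    case: hu => [h|[h1 h2]].
    + have : y - u * x = 0 by apply: t_inj; rewrite h t0.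
      move/eqP; rewrite subr_eq0 => /eqP ->; exact: JM.
    + have w0 : y - u * x != 0 by apply: contraNneq h1 => ->; rewrite t0.
      have Jw : J (y - u * x).
        apply: IH w0 _ _.
        * by apply: le_trans (ltW h2); rewrite vx -hj.
        * have h2' : v (t y) < v (t (y - u * x)) by move: h2; rewrite vx -hj.
          by move: hk h2'; lia.
      have -> : y = (y - u * x) + u * x by rewrite subrK.
      by apply: JD => //; apply: JM.
have allP : forall k, (jm <= k < n)%N -> P k.
  move=> k /andP [hk1 hk2].
  have [y [y0 vy]] : exists y, y != 0 /\ v (t y) = (a k)%:Z.
    by case: ((Ha.2 (a k)).2 (ex_intro _ k erefl)) => y [y0 vy]; exists y.
  case: (eqVneq jm 0%N) => [jm0|jm0].
  - have ux1 : x1 \is a GRing.unit.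
      by apply: (v0_unit Hv Hres Hloc x10); rewrite vx1 jm0 (a0 Hv Ha).
    exists y; split => //; have -> : y = (y * x1^-1) * x1 by rewrite mulrVK.
    exact: JM.
  - case: (eqVneq k jm) => [->|kjm]; first by exists x1.
    have ejm : jm = 1%N by lia.
    have ek : k = 2%N by lia.
    have en : n = 3%N by lia.
    subst k.
    case: (lem (P 2%N)) => // nP2.
    have big : forall w, J w -> w != 0 -> v (t w) != (a 1%N)%:Z -> (a n)%:Z <= v (t w).
      move=> w Jw w0 hw; have [j hj] := val_in Hv Ha w0.
      have hj1 : (jm <= j)%N by apply: jmin'; exists w.
      have j1 : j <> 1%N by move=> e; move/eqP: hw; apply; rewrite hj e.
      have j2 : j <> 2%N by move=> e; apply: nP2; exists w; rewrite -e.
      rewrite hj lez_nat; apply: (a_le Ha); lia.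
    exists y; split; [|split] => //.
    apply: pull => // z Jz.
    have [->|z0] := eqVneq z 0; first by exists 0; rewrite t0 mulr0.
    have gen : forall w, J w -> w != 0 -> v (t w) != (a 1%N)%:Z ->
        exists r, t y / t x1 * t w = t r.
      move=> w Jw w0 hw; apply: (cond Hv Hres Hfin Ha Hn).
      - by rewrite !mulf_neq0 ?invr_neq0 ?t_neq0.
      - have hb := big w Jw w0 hw.
        have a12 : (a 1%N <= a 2%N)%N by apply: (a_le Ha).
        rewrite vM ?mulf_neq0 ?invr_neq0 ?t_neq0 // vdiv ?t_neq0 // vy vx1 ejm.
        move: hb a12; rewrite -lez_nat; lia.
    case: (eqVneq (v (t z)) (a 1%N)%:Z) => [hz|hz]; last exact: gen.
    have e1 : v (t z) = v (t x1) by rewrite hz vx1 ejm.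
    have [u hu] := approx Hv Hres (t_neq0 z0) tx10 e1.
    rewrite -tM -tB in hu.
    have e : t y / t x1 * (t u * t x1) = t u * t y by rewrite mulrCA divfK.
    case: hu => [h|[h1 h2]].
    + exists (u * y).
      have -> : z = u * x1.
        by apply/eqP; rewrite -subr_eq0; apply/eqP/t_inj; rewrite h t0.
      by rewrite !tM e.
    + have w0 : z - u * x1 != 0 by apply: contraNneq h1 => ->; rewrite t0.
      have Jw : J (z - u * x1) by apply: JB => //; apply: JM.
      have hw : v (t (z - u * x1)) != (a 1%N)%:Z by rewrite -ejm -vx1 gt_eqF.
      have [r hr] := gen _ Jw w0 hw.
      exists (r + u * y); rewrite tD -hr tB tM mulrBr e tM subrK //.
exists jm; split => // x; split.
- move=> Jx; have [->|x0'] := eqVneq x 0; [by left | right; split => //; exact: Jmin].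
- exact: fill allP x.
Qed.

End Main.

Record Isub (R : idomainType) (P : R -> Prop) (HP : is_ideal P) :=
  ISub { ival : R; iP : P ival }.

Section Sub.
Variable R : idomainType.
Variable P : R -> Prop.
Hypothesis HP : is_ideal P.
Local Notation Isub := (Isub HP).
Local Notation ISub := (@ISub R P HP).
Local Notation ival := (@ival R P HP).
Local Notation iP := (@iP R P HP).
HB.instance Definition _ := gen_eqMixin Isub.
HB.instance Definition _ := gen_choiceMixin Isub.

Lemma ival_inj : injective ival.
Proof. by case=> x px [y py] /= e; subst y; congr ISub. Qed.

Lemma P0 : P 0. Proof. by case: HP. Qed.
Lemma PD x y : P x -> P y -> P (x + y). Proof. by case: HP => _ [h _]; apply: h. Qed.
Lemma PM c x : P x -> P (c * x). Proof. by case: HP => _ [_ h]; apply: h. Qed.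
Lemma PN x : P x -> P (- x). Proof. by move=> h; rewrite -mulN1r; apply: PM. Qed.

Definition izero := ISub P0.
Definition iadd (x y : Isub) := ISub (PD (iP x) (iP y)).
Definition iopp (x : Isub) := ISub (PN (iP x)).
Definition iscale c (x : Isub) := ISub (PM c (iP x)).

Lemma iaddA : associative iadd.
Proof. by move=> x y z; apply: ival_inj; rewrite /= addrA. Qed.
Lemma iaddC : commutative iadd.
Proof. by move=> x y; apply: ival_inj; rewrite /= addrC. Qed.
Lemma iadd0 : left_id izero iadd.
Proof. by move=> x; apply: ival_inj; rewrite /= add0r. Qed.
Lemma iaddN : left_inverse izero iopp iadd.
Proof. by move=> x; apply: ival_inj; rewrite /= addNr. Qed.

HB.instance Definition _ := GRing.isZmodule.Build Isub iaddA iaddC iadd0 iaddN.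

Lemma iscaleA a b x : iscale a (iscale b x) = iscale (a * b) x.
Proof. by apply: ival_inj; rewrite /= mulrA. Qed.
Lemma iscale1 : left_id 1 iscale.
Proof. by move=> x; apply: ival_inj; rewrite /= mul1r. Qed.
Lemma iscaleDr : right_distributive iscale iadd.
Proof. by move=> c x y; apply: ival_inj; rewrite /= mulrDr. Qed.
Lemma iscaleDl x : {morph iscale^~ x : a b / a + b >-> iadd a b}.
Proof. by move=> c d; apply: ival_inj; rewrite /= mulrDl. Qed.

HB.instance Definition _ := GRing.Zmodule_isLmodule.Build R Isub
  iscaleA iscale1 iscaleDr iscaleDl.

Lemma ival_lin : Rlinear (ival : Isub -> R).
Proof. by []. Qed.

Lemma ival_scale c (x : Isub) : ival (c *: x) = c * ival x.
Proof. by []. Qed.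

End Sub.

Section Main2.
Variable R : idomainType.
Local Notation KK := (K R).
Local Notation t := (@toK R).
Variable v : KK -> int.
Hypothesis Hv : normalized_valuation_of_Rbar v.
Variable a : nat -> nat.
Hypothesis Ha : enumerates (valR v) a.
Variable n : nat.
Hypothesis Hn : conductor_index a n.

Lemma vtM x y : x != 0 -> y != 0 -> v (t (x * y)) = v (t x) + v (t y).
Proof. by move=> x0 y0; rewrite tM vM ?t_neq0. Qed.

Lemma Ij_ideal j : is_ideal (Ij v a j).
Proof.
split; first by left.
split.
- move=> x y [->|[x0 hx]]; first by rewrite add0r.
  move=> [->|[y0 hy]]; first by rewrite addr0; right.
  have [->|s0] := eqVneq (x + y) 0; first by left.
  right; split => //; rewrite tD.
  apply: le_trans (vDmin Hv (t_neq0 x0) (t_neq0 y0) _); last by rewrite -tD t_neq0.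
  by rewrite le_min hx hy.
- move=> c x [->|[x0 hx]]; first by rewrite mulr0; left.
  have [->|c0] := eqVneq c 0; first by rewrite mul0r; left.
  right; split; first by rewrite mulf_neq0.
  rewrite vtM //; apply: le_trans hx _; rewrite lerDr; exact: vt.
Qed.

Lemma I_to_T j : (j <= n)%N -> in_T (Ij v a j).
Proof.
move=> jn.
have [y0 [y00 vy0]] : exists y, y != 0 /\ v (t y) = (a j)%:Z.
  by case: ((Ha.2 (a j)).2 (ex_intro _ j erefl)) => y [y0 vy]; exists y.
have HI := Ij_ideal j.
split; last first.
  by exists y0; split => //; right; rewrite vy0.
pose M := Isub HI.
exists M.
have Iy0 : Ij v a j y0 by right; rewrite vy0.
pose m0 : M := ISub HI Iy0.
have key : forall f : M -> R, Rlinear f -> forall m : M, Ij v a j (f m).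
  move=> f lf.
  have eqn : forall m : M, ival m * f m0 = y0 * f m.
    move=> m; rewrite -!RlinZ //; congr f; apply: ival_inj.
    by rewrite !ival_scale /= mulrC.
  have claim : f m0 = 0 \/ (a j)%:Z <= v (t (f m0)).
    have [->|f0] := eqVneq (f m0) 0; first by left.
    right; rewrite leNgt; apply/negP => hlt.
    have hge := vt Hv f0.
    have n0 : (0 < n)%N.
      rewrite lt0n; apply/negP => /eqP n0; move: jn; rewrite n0 leqn0 => /eqP j0.
      by move: hlt hge; rewrite j0 (a0 Hv Ha); lia.
    have an0 : (0 < a n)%N by rewrite -(a0 Hv Ha); apply: (a_lt Ha).
    have ajn : (a j <= a n)%N by apply: (a_le Ha).
    pose s : int := (a n)%:Z - 1 + ((a j)%:Z - v (t (f m0))).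
    have hs : (a n)%:Z <= s by rewrite /s; move: hlt; lia.
    have [y [y0' vy]] := valR_of Ha Hn hs.
    have Iy : Ij v a j y by right; split => //; rewrite vy; move: hs ajn; rewrite -lez_nat; lia.
    have e := eqn (ISub HI Iy); rewrite /= in e.
    have fm0 : f (ISub HI Iy) != 0.
      by apply/negP => /eqP h; move: e; rewrite h mulr0 => /eqP; rewrite mulf_eq0 (negbTE y0') (negbTE f0).
    have := congr1 (fun z => v (t z)) e; rewrite /= !vtM // vy vy0 /s => hv.
    have hv' : v (t (f (ISub HI Iy))) = ((a n).-1)%:Z by move: hv an0; lia.
    have [k hk] := val_in Hv Ha fm0.
    apply: (gap Hv Ha Hn n0 (j:=k)); move: hk; rewrite hv' => /eqP; rewrite eqz_nat => /eqP.
    by move=> ->.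
  move=> m; have [->|fm] := eqVneq (f m) 0; first by left.
  right; split => //.
  have e := eqn m.
  have im0 : ival m != 0 by apply/negP => /eqP h; move: e; rewrite h mul0r => /eqP; rewrite eq_sym mulf_eq0 (negbTE y00) (negbTE fm).
  have f0 : f m0 != 0 by apply/negP => /eqP h; move: e; rewrite h mulr0 => /eqP; rewrite eq_sym mulf_eq0 (negbTE y00) (negbTE fm).
  have hc : (a j)%:Z <= v (t (f m0)) by case: claim => // /eqP; rewrite (negbTE f0).
  have hm : (a j)%:Z <= v (t (ival m)) by case: (iP m) => [/eqP|[]//]; rewrite (negbTE im0).
  have := congr1 (fun z => v (t z)) e; rewrite /= !vtM // vy0 => hv.
  by move: hv hc hm; lia.
move=> x; split.
- move=> hx; exists [:: (@ival _ _ HI : M -> R, (ISub HI hx : M))]; split.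
    by move=> p [<-|[]] /=; apply: ival_lin.
  by rewrite big_seq1.
- case=> s [hs ->].
  elim: s hs => [|p s IH] hs; first by rewrite big_nil; left.
  rewrite big_cons; apply: (PD HI).
    by apply: key; apply: hs; left.
  by apply: IH => q hq; apply: hs; right.
Qed.

End Main2.

Theorem corollary3p9 (R : idomainType)
  (Hnoeth : noetherian R) (Hloc : local_ring R) (Hdim : dim_one R)
  (Hai : analytically_irreducible R)
  (Hfin : Rbar_finite R) (HRbloc : Rbar_local R)
  (Hres : residue_iso R)
  (v : K R -> int) (Hv : normalized_valuation_of_Rbar v)
  (a : nat -> nat) (Ha : enumerates (valR v) a)
  (n : nat) (Hn : conductor_index a n)
  (Hn3 : (n <= 3)%N) :
  forall J : R -> Prop, in_T J <-> in_I v a n J.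
Proof.
move=> J; split.
- case=> [[M HJ] [x0 [x00 Jx0]]].
  have Jid : is_ideal J.
    have [h0 [hD hM]] := trace_is_ideal M.
    split; first by apply/HJ.
    split; first by move=> x y /HJ hx /HJ hy; apply/HJ; apply: hD.
    by move=> c x /HJ hx; apply/HJ; apply: hM.
  exact: (T_to_I Hv Hres Hloc Hfin Ha Hn Hn3 Jid (trace_mult HJ) x00 Jx0).
- case=> j [jn HJ].
  have [[M HM] [x0 [x00 Ix0]]] := I_to_T Hv Ha Hn jn.
  split.
  + by exists M => x; rewrite HJ HM.
  + by exists x0; split => //; apply/HJ.
Qed.
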